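(* Let $(G,\Sigma)$ be an $n$-vertex signed graph and let $v,w$ be non-adjacent vertices of $G$ with degrees $d_1,d_2$, such that $N^-(v)=\emptyset$ and $N^-(w)\subseteq N(v)\cap N(w)$. Set $V_1=N^+(v)\setminus N(w)$, $V_2=N^+(w)\setminus N(v)$, $V_3=N^+(v)\cap N^+(w)$, $V_4=N^+(v)\cap N^-(w)$, $V_5=V(G)\setminus(N(v)\cup N(w)\cup\{v,w\})$, and order the vertices as $v,w,V_1,V_2,V_3,V_4,V_5$. Suppose spectral integral variation of type 2 occurs under the addition of an even edge $vw$, increasing the eigenvalues $\lambda_1,\lambda_2$ of $L(G,\Sigma)$ by $1$, and that there is an orthogonal basis $v_1,\dots,v_n$ of eigenvectors of $L(G,\Sigma)$ such that: (1) for $i\in\{1,2\}$, $v_i$ is a $\lambda_i$-eigenvector with first two entries $a_i,b_i$ satisfying $(a_i-b_i)^2/\|v_i\|^2=1+1/(\lambda_{3-i}-\lambda_i)$; (2) for $j\in\{3,\dots,n\}$ the first two entries of $v_j$ are equal; and (3) for $i\in\{1,2\}$, the vector obtained from $v_i$ by deleting its first two entries equals $x_2-x_1$, where $x_1,x_2$ are the first and second columns of $L(G,\Sigma)$ with their first two entries deleted (i.e. it equals $\mathbf{1}$ on $V_1$, $-\mathbf{1}$ on $V_2$, $\mathbf{0}$ on $V_3$, $2\cdot\mathbf{1}$ on $V_4$, $\mathbf{0}$ on $V_5$). Then for each $i\in\{1,2\}$, $a_i=-\lambda_i+d_2+1$ and $b_i=\lambda_i-d_1-1$.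
   Context: All graphs are finite and simple. A signed graph is a pair $(G,\Sigma)$ with $\Sigma\subseteq E(G)$; edges in $\Sigma$ are odd, the others even. $N^-(u)$ (resp. $N^+(u)$) is the set of neighbors joined to $u$ by an odd (resp. even) edge, and $N(u)=N^-(u)\cup N^+(u)$. The signed Laplacian is $L(G,\Sigma)=D(G)-A(G,\Sigma)$, $D(G)$ the diagonal degree matrix, $A(G,\Sigma)$ having $(i,j)$-entry $1$ for an even edge, $-1$ for an odd edge, $0$ otherwise. Adding an even edge $vw$ means passing from $L(G,\Sigma)$ to $L(G+vw,\Sigma)$. Spectral integral variation of type 2 means the multiset of eigenvalues of $L(G+vw,\Sigma)$ is obtained from that of $L(G,\Sigma)$ by increasing two eigenvalues (counted with multiplicity) by $1$ each. *)

(* Defs.v *)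
From HB Require Import structures.
From mathcomp Require Import all_boot all_order all_algebra.
Set Implicit Arguments. Unset Strict Implicit. Unset Printing Implicit Defensive.
Import Order.TTheory GRing.Theory Num.Theory.
Local Open Scope ring_scope.

(* A signed graph on the vertex set 'I_n: [e] is the (simple) edge relation
   and [sg] marks the odd edges (Sigma); see [signed_graph]. *)
Definition signed_graph (n : nat) (e sg : rel 'I_n) : Prop :=
  [/\ irreflexive e, symmetric e, symmetric sg & subrel sg e].

Definition nbhd n (e : rel 'I_n) (u : 'I_n) : {set 'I_n} := [set x | e u x].
Definition nbhd_odd n (e sg : rel 'I_n) (u : 'I_n) : {set 'I_n} :=
  [set x | e u x && sg u x].
Definition nbhd_even n (e sg : rel 'I_n) (u : 'I_n) : {set 'I_n} :=
  [set x | e u x && ~~ sg u x].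

Definition deg n (e : rel 'I_n) (u : 'I_n) : nat := #|nbhd e u|.

Definition sadj (R : ringType) n (e sg : rel 'I_n) : 'M[R]_n :=
  \matrix_(i, j) (if e i j then (if sg i j then -1 else 1) else 0).
Definition degmx (R : ringType) n (e : rel 'I_n) : 'M[R]_n :=
  \matrix_(i, j) (if i == j then (deg e i)%:R else 0).
Definition slap (R : ringType) n (e sg : rel 'I_n) : 'M[R]_n :=
  degmx R e - sadj R e sg.

Definition add_edge n (e : rel 'I_n) (v w : 'I_n) : rel 'I_n :=
  fun x y => [|| e x y, (x == v) && (y == w) | (x == w) && (y == v)].

(* Spectral integral variation of type 2 when adding the even edge vw,
   increasing the eigenvalues lam1, lam2 (counted with multiplicity):
   the eigenvalue multiset of L(G,Sigma) is {lam1, lam2} + s and that of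
   L(G+vw,Sigma) is {lam1+1, lam2+1} + s (multisets of eigenvalues are
   the root multisets of the characteristic polynomials). *)
Definition siv_type2 (R : comRingType) n (e sg : rel 'I_n) (v w : 'I_n)
    (lam1 lam2 : R) : Prop :=
  exists s : seq R,
    char_poly (slap R e sg) =
      ('X - lam1%:P) * ('X - lam2%:P) * \prod_(x <- s) ('X - x%:P) /\
    char_poly (slap R (add_edge e v w) sg) =
      ('X - (lam1 + 1)%:P) * ('X - (lam2 + 1)%:P) * \prod_(x <- s) ('X - x%:P).

Definition dotv (R : ringType) n (x y : 'cV[R]_n) : R :=
  \sum_(k < n) x k 0 * y k 0.
Definition sqnorm (R : ringType) n (x : 'cV[R]_n) : R := dotv x x.

(* Main.v *)
Require Import Defs.
From HB Require Import structures.
From mathcomp Require Import all_boot all_order all_algebra.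
From mathcomp Require Import ring lra.
Import Order.TTheory GRing.Theory Num.Theory.
Local Open Scope ring_scope.

Lemma sum2 (R : comRingType) n (v w : 'I_n) (f g : 'I_n -> R) :
  v != w -> (forall k, k != v -> k != w -> g k = 0) ->
  \sum_k f k * g k = f v * g v + f w * g w.
Proof.
move=> vw H; rewrite (bigD1 v) //= (bigD1 w) /=; last by rewrite eq_sym.
by rewrite big1 ?addr0 // => k /andP [kv kw]; rewrite H ?mulr0.
Qed.

Lemma sqnorm_neq0 (R : realFieldType) n (x : 'cV[R]_n) : x != 0 -> sqnorm x != 0.
Proof.
apply: contra => /eqP h; apply/eqP/matrixP => i j; rewrite (ord1 j) mxE.
have /psumr_eq0P h2 := h.
have := h2 (fun k _ => sqr_ge0 (x k 0)) i isT.
by move/eqP; rewrite mulf_eq0 orbb => /eqP.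
Qed.

Lemma alg1 (R : realFieldType) (al1 al2 a1 a2 b1 b2 l1 l2 d1 d2 : R) :
  l1 != l2 -> al1 + al2 = 0 -> al1 * l1 + al2 * l2 = -1 ->
  al1 * a1 + al2 * a2 = 1 -> al1 * l1 * a1 + al2 * l2 * a2 = d1 ->
  al1 * b1 + al2 * b2 = -1 -> al1 * l1 * b1 + al2 * l2 * b2 = -d2 ->
  al1 * (a1-b1) = 1 + (l2-l1)^-1 ->
  [/\ a1 = -l1+d2+1, b1 = l1 - d1 - 1, a2 = -l2+d2+1 & b2 = l2 - d1 - 1].
Proof.
move=> l12 s1 s2 h1 h2 h3 h4 h5.
have al2E : al2 = - al1 by apply/eqP; rewrite -subr_eq0 opprK addrC s1.
have DnZ : l2 - l1 != 0 by rewrite subr_eq0 eq_sym.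
have hD : (l2 - l1) * al1 = 1.
  have t : al1 * (l1 - l2) = -1 by rewrite -s2 al2E; ring.
  by apply: oppr_inj; rewrite -t; ring.
have K : forall z, z = (l2 - l1) * (al1 * z) by move=> z; rewrite mulrA hD mul1r.
have e1 : al1 * (a1 - a2) = 1 by rewrite -h1 al2E; ring.
have g1 : a1 - a2 = l2 - l1 by rewrite [LHS]K e1 mulr1.
have e2 : al1 * (l1 * a1 - l2 * a2) = d1 by rewrite -h2 al2E; ring.
have g2 : l1 * a1 - l2 * a2 = d1 * (l2 - l1) by rewrite [LHS]K e2 mulrC.
have e3 : al1 * (b1 - b2) = -1 by rewrite -h3 al2E; ring.
have g3 : b1 - b2 = l1 - l2 by rewrite [LHS]K e3 mulrN1 opprB.
have e4 : al1 * (l1 * b1 - l2 * b2) = -d2 by rewrite -h4 al2E; ring.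
have g4 : l1 * b1 - l2 * b2 = - d2 * (l2 - l1) by rewrite [LHS]K e4 mulrC.
have g5 : a1 - b1 = (l2 - l1) + 1.
  by rewrite [LHS]K h5 mulrDr mulr1 mulfV.
have ea1 : a1 = l2 - d1.
  apply: (mulfI DnZ); apply/eqP; rewrite -subr_eq0; apply/eqP.
  have -> : (l2 - l1) * a1 - (l2 - l1) * (l2 - d1) = l2 * (a1 - a2 - (l2 - l1)) - (l1 * a1 - l2 * a2 - d1 * (l2 - l1)) by ring.
  by rewrite g1 g2 !subrr mulr0 subrr.
have eb1 : b1 = d2 - l2.
  apply: (mulfI DnZ); apply/eqP; rewrite -subr_eq0; apply/eqP.
  have -> : (l2 - l1) * b1 - (l2 - l1) * (d2 - l2) = l2 * (b1 - b2 - (l1 - l2)) - (l1 * b1 - l2 * b2 + d2 * (l2 - l1)) by ring.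
  by rewrite g3 g4 subrr mulr0 mulNr addNr subrr.
by split; lra.
Qed.

Lemma alg2a (R : realFieldType) (a b N l l' : R) :
  l != l' -> N = a ^+ 2 + b ^+ 2 -> N != 0 ->
  (a - b) ^+ 2 / N = 1 + (l' - l)^-1 -> a != 0 /\ b != 0.
Proof.
move=> ll' NE N0 h.
have tnz : (l' - l)^-1 != 0 by rewrite invr_eq0 subr_eq0 eq_sym.
have F : (a - b) ^+ 2 / N = 1 -> False.
  move=> h1; rewrite h1 in h.
  have t0 : (l' - l)^-1 = 0 by apply: (addrI 1); rewrite addr0 -h.
  by rewrite t0 eqxx in tnz.
split; apply/eqP => z; apply: F.
  have NE' : N = b ^+ 2 by rewrite NE z expr2 mul0r add0r.
  by rewrite z sub0r sqrrN -NE' divff.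
have NE' : N = a ^+ 2 by rewrite NE z [0 ^+ 2]expr2 mul0r addr0.
by rewrite z subr0 -NE' divff.
Qed.
Arguments alg2a {R a b N l l'}.

Lemma alg2 (R : realFieldType) (a1 b1 a2 b2 l1 l2 d1 d2 N1 N2 : R) :
  l1 != l2 -> N1 = a1 ^+ 2 + b1 ^+ 2 -> N2 = a2 ^+ 2 + b2 ^+ 2 ->
  N1 != 0 -> N2 != 0 ->
  (a1 - b1) ^+ 2 / N1 = 1 + (l2 - l1)^-1 ->
  (a2 - b2) ^+ 2 / N2 = 1 + (l1 - l2)^-1 ->
  d1 * a1 = l1 * a1 -> d2 * b1 = l1 * b1 ->
  d1 * a2 = l2 * a2 -> d2 * b2 = l2 * b2 -> False.
Proof.
move=> l12 N1E N2E N10 N20 h1 h2 e1 e2 e3 e4.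
have [a10 b10] := alg2a l12 N1E N10 h1.
have [a20 b20] : a2 != 0 /\ b2 != 0 by apply: (alg2a _ N2E N20 h2); rewrite eq_sym.
have := mulIf a10 e1; have := mulIf b10 e2; have := mulIf a20 e3.
by move=> x y z; move: l12; rewrite -x -z eqxx.
Qed.
Arguments sum2 {R n v w f g}.
Arguments sqnorm_neq0 {R n x}.
Arguments alg1 {R al1 al2 a1 a2 b1 b2 l1 l2 d1 d2}.
Arguments alg2 {R a1 b1 a2 b2 l1 l2 d1 d2 N1 N2}.

Theorem lemma2p7 (R : realFieldType) (n : nat) (e sg : rel 'I_n)
  (v w : 'I_n) (p1 p2 : 'I_n) (lam1 lam2 : R) (V : 'I_n -> 'cV[R]_n) :
  signed_graph e sg ->
  v != w -> ~~ e v w ->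
  nbhd_odd e sg v = set0 ->
  nbhd_odd e sg w \subset nbhd e v :&: nbhd e w ->
  siv_type2 e sg v w lam1 lam2 ->
  lam1 != lam2 ->
  p1 != p2 ->
  (forall j, V j != 0) ->
  (forall j k, j != k -> dotv (V j) (V k) = 0) ->
  row_free (\matrix_(j < n) (V j)^T) ->
  (forall j, exists mu : R, slap R e sg *m V j = mu *: V j) ->
  slap R e sg *m V p1 = lam1 *: V p1 ->
  slap R e sg *m V p2 = lam2 *: V p2 ->
  (V p1 v 0 - V p1 w 0) ^+ 2 / sqnorm (V p1) = 1 + (lam2 - lam1)^-1 ->
  (V p2 v 0 - V p2 w 0) ^+ 2 / sqnorm (V p2) = 1 + (lam1 - lam2)^-1 ->
  (forall j, j != p1 -> j != p2 -> V j v 0 = V j w 0) ->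
  (forall u, u != v -> u != w ->
     V p1 u 0 = slap R e sg u w - slap R e sg u v) ->
  (forall u, u != v -> u != w ->
     V p2 u 0 = slap R e sg u w - slap R e sg u v) ->
  [/\ V p1 v 0 = - lam1 + (deg e w)%:R + 1,
      V p1 w 0 = lam1 - (deg e v)%:R - 1,
      V p2 v 0 = - lam2 + (deg e w)%:R + 1
    & V p2 w 0 = lam2 - (deg e v)%:R - 1].
Proof.
move=> [irr sym _ _] vw nevw _ _ _ l12 p12 V0 orth rf _ E1 E2 H1 H2 C3 X1 X2.
set L := slap R e sg in E1 E2 X1 X2 *.
have nevw' : ~~ e w v by rewrite sym.
have Lvv : L v v = (deg e v)%:R by rewrite /L /slap !mxE eqxx irr subr0.
have Lww : L w w = (deg e w)%:R by rewrite /L /slap !mxE eqxx irr subr0.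
have Lvw : L v w = 0 by rewrite /L /slap !mxE (negbTE vw) (negbTE nevw) subr0.
have Lwv : L w v = 0 by rewrite /L /slap !mxE eq_sym (negbTE vw) (negbTE nevw') subr0.
have pp : p2 != p1 by rewrite eq_sym.
have X21 : forall u, u != v -> u != w -> V p2 u 0 = V p1 u 0.
  by move=> u h h'; rewrite X1 ?X2.
set N1 := sqnorm (V p1) in H1 *.
set N2 := sqnorm (V p2) in H2 *.
have N1nz : N1 != 0 := sqnorm_neq0 (V0 p1).
have N2nz : N2 != 0 := sqnorm_neq0 (V0 p2).
pose ev : 'cV[R]_n := delta_mx v 0 - delta_mx w 0.
have evE : forall k, ev k 0 = (k == v)%:R - (k == w)%:R.
  by move=> k; rewrite !mxE !andbT.
have ev0 : forall k, k != v -> k != w -> ev k 0 = 0.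
  by move=> k h h'; rewrite evE (negbTE h) (negbTE h') subrr.
have dotev : forall j, dotv (V j) ev = V j v 0 - V j w 0.
  move=> j; rewrite /dotv (@sum2 _ _ v w (fun k => V j k 0) (fun k => ev k 0) vw ev0).
  by rewrite !evE eqxx (negbTE vw) eq_sym (negbTE vw) eqxx /=; ring.
set al1 := (V p1 v 0 - V p1 w 0) / N1.
set al2 := (V p2 v 0 - V p2 w 0) / N2.
have y0 : ev - al1 *: V p1 - al2 *: V p2 = 0.
  set M := \matrix_(j < n) (V j)^T.
  have Mu : M \in unitmx by rewrite -row_free_unit.
  set y := ev - _ - _.
  suff My : M *m y = 0 by rewrite -(mulKmx Mu y) My mulmx0.
  apply/matrixP => j i; rewrite (ord1 i) !mxE.
  have -> : \sum_k M j k * y k 0 = dotv (V j) ev - al1 * dotv (V j) (V p1) - al2 * dotv (V j) (V p2).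
    rewrite /dotv !mulr_sumr -!sumrB; apply: eq_bigr => k _; rewrite /M /y !mxE; ring.
  rewrite dotev.
  case: (eqVneq j p1) => [-> | jp1].
    by rewrite (orth _ _ p12) -/N1 /al1 divfK // mulr0 subr0 subrr.
  case: (eqVneq j p2) => [-> | jp2].
    by rewrite (orth _ _ pp) -/N2 /al2 divfK // mulr0 subr0 subrr.
  by rewrite (orth _ _ jp1) (orth _ _ jp2) (C3 _ jp1 jp2) !mulr0 !subrr.
have yE : ev = al1 *: V p1 + al2 *: V p2.
  by apply/eqP; move/eqP: y0; rewrite !subr_eq0 subr_eq addrC.
have yk : forall k, ev k 0 = al1 * V p1 k 0 + al2 * V p2 k 0.
  by move=> k; rewrite [ev]yE !mxE.
have Lyk : forall k, (L *m ev) k 0 = al1 * lam1 * V p1 k 0 + al2 * lam2 * V p2 k 0.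
  by move=> k; rewrite [ev]yE mulmxDr -!scalemxAr E1 E2 !mxE !mulrA.
have Lev : forall k, (L *m ev) k 0 = L k v - L k w.
  move=> k; rewrite mxE (@sum2 _ _ v w (fun j => L k j) (fun j => ev j 0) vw ev0).
  by rewrite !evE eqxx (negbTE vw) eq_sym (negbTE vw) eqxx /=; ring.
have evv : ev v 0 = 1 by rewrite evE eqxx (negbTE vw) subr0.
have evw : ev w 0 = -1 by rewrite evE eqxx eq_sym (negbTE vw) sub0r.
case: (boolP [exists u, [&& u != v, u != w & V p1 u 0 != 0]]).
  move/existsP => [u /and3P [uv uw xu]].
  have x2 := X21 u uv uw.
  have hx := X1 u uv uw.
  have s1 : al1 + al2 = 0.
    by apply: (mulIf xu); rewrite mul0r mulrDl -{2}x2 -yk ev0.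
  have s2 : al1 * lam1 + al2 * lam2 = -1.
    apply: (mulIf xu).
    have -> : -1 * V p1 u 0 = L u v - L u w by rewrite hx; ring.
    by rewrite -Lev Lyk x2; ring.
  have h1 : al1 * V p1 v 0 + al2 * V p2 v 0 = 1 by rewrite -yk evv.
  have h2 : al1 * lam1 * V p1 v 0 + al2 * lam2 * V p2 v 0 = (deg e v)%:R.
    by rewrite -Lyk Lev Lvv Lvw subr0.
  have h3 : al1 * V p1 w 0 + al2 * V p2 w 0 = -1 by rewrite -yk evw.
  have h4 : al1 * lam1 * V p1 w 0 + al2 * lam2 * V p2 w 0 = - (deg e w)%:R.
    by rewrite -Lyk Lev Lww Lwv sub0r.
  have h5 : al1 * (V p1 v 0 - V p1 w 0) = 1 + (lam2 - lam1)^-1.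
    by rewrite -H1 /al1 expr2; ring.
  have [A B C D] := alg1 l12 s1 s2 h1 h2 h3 h4 h5.
  by split.
move/existsPn => H.
have z1 : forall u, u != v -> u != w -> V p1 u 0 = 0.
  by move=> u uv uw; move: (H u); rewrite uv uw /= negbK => /eqP.
have z2 : forall u, u != v -> u != w -> V p2 u 0 = 0.
  by move=> u uv uw; rewrite X21 // z1.
have N1E : N1 = V p1 v 0 ^+ 2 + V p1 w 0 ^+ 2.
  by rewrite /N1 /sqnorm /dotv (@sum2 _ _ v w (fun k => V p1 k 0) (fun k => V p1 k 0) vw z1) !expr2.
have N2E : N2 = V p2 v 0 ^+ 2 + V p2 w 0 ^+ 2.
  by rewrite /N2 /sqnorm /dotv (@sum2 _ _ v w (fun k => V p2 k 0) (fun k => V p2 k 0) vw z2) !expr2.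
have eig : forall p lam k, (forall u, u != v -> u != w -> V p u 0 = 0) ->
    L *m V p = lam *: V p -> (L *m V p) k 0 = L k v * V p v 0 + L k w * V p w 0.
  move=> p lam k zp Ep.
  by rewrite mxE (@sum2 _ _ v w (fun j => L k j) (fun j => V p j 0) vw zp).
have e1 : (deg e v)%:R * V p1 v 0 = lam1 * V p1 v 0.
  by have := eig p1 lam1 v z1 E1; rewrite E1 mxE Lvv Lvw mul0r addr0.
have e2 : (deg e w)%:R * V p1 w 0 = lam1 * V p1 w 0.
  by have := eig p1 lam1 w z1 E1; rewrite E1 mxE Lww Lwv mul0r add0r.
have e3 : (deg e v)%:R * V p2 v 0 = lam2 * V p2 v 0.
  by have := eig p2 lam2 v z2 E2; rewrite E2 mxE Lvv Lvw mul0r addr0.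
have e4 : (deg e w)%:R * V p2 w 0 = lam2 * V p2 w 0.
  by have := eig p2 lam2 w z2 E2; rewrite E2 mxE Lww Lwv mul0r add0r.
exfalso; exact: (alg2 l12 N1E N2E N1nz N2nz H1 H2 e1 e2 e3 e4).
Qed.
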